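(* Let $X$ be a finite set. (i) If $F$ is a set of permutations of $X$, then $\langle F\rangle_G=\mathrm{Aut}(\mathrm{Inv}(F))$. (ii) If $F$ is a set of multipermutations on $X$, then $\langle F\rangle_{DSM}=\mathrm{shE}(\mathrm{Inv}(F))$.
   Context: A multipermutation on $X$ is a map $f:X\to\mathcal{P}(X)\setminus\{\emptyset\}$ such that every $y\in X$ lies in $f(x)$ for some $x$; permutations are identified with multipermutations with singleton images. A multipermutation $f$ preserves a relation $R\subseteq X^i$ if $(x_1,\dots,x_i)\in R$ and $y_j\in f(x_j)$ for all $j$ imply $(y_1,\dots,y_i)\in R$. $\mathrm{Inv}(F)$ is the set of all relations on $X$ (of all finite arities) preserved by every member of $F$, regarded as a relational structure on $X$. For a structure $\mathcal{C}$ on $X$, $\mathrm{Aut}(\mathcal{C})$ is its set of automorphisms and $\mathrm{shE}(\mathcal{C})$ is the set of multipermutations on $X$ preserving all relations of $\mathcal{C}$. The identity multipermutation is $x\mapsto\{x\}$; the composition $g\circ f$ is $x\mapsto\{z:\exists y\,(y\in f(x)\wedge z\in g(y))\}$; $f$ is a sub-multipermutation of $g$ if $f(x)\subseteq g(x)$ for all $x$. A down-shop-monoid (DSM) on $X$ is a set of multipermutations on $X$ containing the identity and closed under composition and under taking sub-multipermutations (that are themselves multipermutations). $\langle F\rangle_{DSM}$ is the smallest DSM containing $F$, and $\langle F\rangle_G$ is the permutation group generated by $F$. *)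

(* Defs.v *)
From mathcomp Require Import all_boot all_fingroup.
Set Implicit Arguments. Unset Strict Implicit. Unset Printing Implicit Defensive.

(* X is modelled by a finite type T. *)
Section Defs.
Variable T : finType.

Definition relation := {n : nat & {set n.-tuple T}}.
Definition structure := relation -> Prop.

Definition mmap := T -> {set T}.
Definition is_multiperm (f : mmap) : Prop :=
  (forall x, f x != set0) /\ (forall y, exists x, y \in f x).

(* Permutations identified with singleton-image multipermutations. *)
Definition mp_of_perm (g : {perm T}) : mmap := fun x => [set g x].

Definition mp_id : mmap := fun x => [set x].
Definition mp_comp (g f : mmap) : mmap := fun x => \bigcup_(y in f x) g y.
Definition sub_mp (f g : mmap) : Prop := forall x, f x \subset g x.

Definition preserves (f : mmap) (R : relation) : Prop :=
  forall (t u : (projT1 R).-tuple T), t \in projT2 R ->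
    (forall j, tnth u j \in f (tnth t j)) -> u \in projT2 R.

Definition Inv (F : mmap -> Prop) : structure :=
  fun R => forall f, F f -> preserves f R.

Definition InvP (F : {set {perm T}}) : structure :=
  Inv (fun f => exists2 g, g \in F & f = mp_of_perm g).

Definition AutS (C : structure) (g : {perm T}) : Prop :=
  forall R, C R -> forall t : (projT1 R).-tuple T,
    (t \in projT2 R) = ([tuple of map g t] \in projT2 R).

Definition shE (C : structure) (f : mmap) : Prop :=
  is_multiperm f /\ forall R, C R -> preserves f R.

Definition is_DSM (M : mmap -> Prop) : Prop :=
  [/\ forall f, M f -> is_multiperm f,
      M mp_id,
      forall f g, M f -> M g -> M (mp_comp g f) &
      forall f g, M g -> is_multiperm f -> sub_mp f g -> M f].

Definition gen_DSM (F : mmap -> Prop) (f : mmap) : Prop :=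
  forall M, is_DSM M -> (forall h, F h -> M h) -> M f.

End Defs.

(* Main.v *)
Require Import Defs.
From mathcomp Require Import all_boot all_fingroup.
From Stdlib Require Import ClassicalEpsilon.
Set Implicit Arguments. Unset Strict Implicit. Unset Printing Implicit Defensive.

Definition pb (P : Prop) : bool := if excluded_middle_informative P then true else false.
Lemma pbP P : reflect P (pb P).
Proof. by rewrite /pb; case: excluded_middle_informative => h; constructor. Qed.

Section Part1.
Variable T : finType.
Import GroupScope.

Definition etup : #|T|.-tuple T := [tuple enum_val i | i < #|T|].

Lemma part1 (F : {set {perm T}}) (g : {perm T}) :
  g \in <<F>> <-> AutS (InvP F) g.
Proof.
split.
- move=> gF R HR.
  pose S := [set h : {perm T} | [forall t in projT2 R, [tuple of map h t] \in projT2 R]].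
  have gsS : group_set S.
    apply/andP; split.
      rewrite inE; apply/forallP => t; apply/implyP => tR.
      suff -> : [tuple of map (1 : {perm T}) t] = t by [].
      by apply: eq_from_tnth => j; rewrite tnth_map perm1.
    apply/subsetP => x /mulsgP [a b]; rewrite !inE => /forall_inP Ha /forall_inP Hb ->.
    apply/forall_inP => t tR.
    have := Hb _ (Ha _ tR).
    suff -> : [tuple of map (a * b) t] = [tuple of map b [tuple of map a t]] by [].
    by apply: eq_from_tnth => j; rewrite !tnth_map permM.
  have sub : <<F>> \subset Group gsS.
    rewrite gen_subG; apply/subsetP => h hF; rewrite /= inE.
    apply/forall_inP => t tR.
    apply: (HR (mp_of_perm h)); first by exists h.
    exact: tR.
    by move=> j; rewrite tnth_map /mp_of_perm inE.
  have inS : forall h, h \in <<F>> -> forall t, t \in projT2 R -> [tuple of map h t] \in projT2 R.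
    by move=> h /(subsetP sub); rewrite /= inE => /forall_inP.
  move=> t; apply/idP/idP; first exact: inS.
  move=> /(inS _ (groupVr gF)).
  suff -> : [tuple of map g^-1 [tuple of map g t]] = t by [].
  by apply: eq_from_tnth => j; rewrite !tnth_map permK.
- move=> Ag.
  pose S := [set [tuple of map (h : {perm T}) etup] | h in <<F>>].
  pose R := existT (fun n => {set n.-tuple T}) #|T| S.
  have HR : InvP F R.
    move=> f [g' g'F ->] t u /= /imsetP [h hF ->] Hu.
    apply/imsetP; exists (h * g'); first by rewrite groupM // mem_gen.
    apply: eq_from_tnth => j; have := Hu j.
    by rewrite !tnth_map /mp_of_perm inE permM => /eqP ->.
  have eR : etup \in S.
    apply/imsetP; exists 1; first exact: group1.
    by apply: eq_from_tnth => j; rewrite tnth_map perm1.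
  have := Ag R HR etup; rewrite /= eR => /esym /imsetP [h hF Eh].
  suff -> : g = h by [].
  apply/permP => x.
  have := congr1 (fun t => tnth t (enum_rank x)) Eh.
  rewrite /= !tnth_map /etup.
  by rewrite tnth_ord_tuple enum_rankK.
Qed.
End Part1.

Section Part2.
Variable T : finType.

Lemma comp_mp (f g : mmap T) : is_multiperm f -> is_multiperm g -> is_multiperm (mp_comp g f).
Proof.
move=> [f1 f2] [g1 g2]; split.
- move=> x; have [y yf] := set0Pn _ (f1 x); have [z zg] := set0Pn _ (g1 y).
  by apply/set0Pn; exists z; apply/bigcupP; exists y.
- move=> z; have [y zg] := g2 z; have [x yf] := f2 y.
  by exists x; apply/bigcupP; exists y.
Qed.

Lemma comp_pres (f g : mmap T) R : preserves f R -> preserves g R -> preserves (mp_comp g f) R.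
Proof.
move=> Pf Pg t u tR Hu.
pose v := [tuple odflt (tnth t j) [pick y | (y \in f (tnth t j)) && (tnth u j \in g y)] | j < projT1 R].
have Hv : forall j, (tnth v j \in f (tnth t j)) && (tnth u j \in g (tnth v j)).
  move=> j; rewrite tnth_mktuple; case: pickP => //= Hn.
  have /bigcupP [y yf ug] := Hu j.
  by have := Hn y; rewrite yf ug.
apply: (Pg v) => [|j]; last by case/andP: (Hv j).
by apply: (Pf t) => // j; case/andP: (Hv j).
Qed.

Lemma part2 (F : mmap T -> Prop) : (forall f, F f -> is_multiperm f) ->
      forall f : mmap T, gen_DSM F f <-> shE (Inv F) f.
Proof.
move=> HF f; split.
- move=> H; apply: H.
  + split.
    * by move=> h [].
    * split.
        split; first by move=> x; apply/set0Pn; exists x; rewrite inE.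
        by move=> y; exists y; rewrite inE.
      move=> R _ t u tR Hu.
      suff -> : u = t by [].
      by apply: eq_from_tnth => j; have := Hu j; rewrite inE => /eqP.
    * move=> h1 h2 [m1 p1] [m2 p2]; split; first exact: comp_mp.
      by move=> R CR; apply: comp_pres; [apply: p1|apply: p2].
    * move=> h1 h2 [m2 p2] m1 s12; split => // R CR t u tR Hu.
      by apply: (p2 R CR t) => // j; apply: (subsetP (s12 _)).
  + move=> h Fh; split; first exact: HF.
    by move=> R IR; apply: IR.
- move=> [mf pf] M [M1 M2 M3 M4] MF.
  pose n := #|{: T * T}|.
  pose t0 : n.-tuple T := [tuple (enum_val i).1 | i < n].
  pose S := [set u : n.-tuple T | pb (exists h, M h /\ forall j, tnth u j \in h (tnth t0 j))].
  pose R := existT (fun n => {set n.-tuple T}) n S.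
  have IR : Inv F R.
    move=> f' Ff' t u /=; rewrite inE => /pbP [h [Mh Ht]] Hu.
    rewrite inE; apply/pbP; exists (mp_comp f' h); split; first by apply: M3 => //; apply: MF.
    by move=> j; apply/bigcupP; exists (tnth t j).
  have tS : t0 \in S.
    by rewrite inE; apply/pbP; exists (@mp_id T); split => // j; rewrite inE.
  pose u : n.-tuple T := [tuple let p := enum_val i in
     if p.2 \in f p.1 then p.2 else odflt p.1 [pick y in f p.1] | i < n].
  have uS : u \in S.
    apply: (pf R IR t0) => [|j]; first exact: tS.
    rewrite /u /t0 !tnth_mktuple.
    case: ifP => // _; case: pickP => //= Hn.
    by have [y yf] := set0Pn _ (mf.1 (enum_val j).1); have := Hn y; rewrite yf.
  move: uS; rewrite inE => /pbP [h [Mh Hh]].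
  have sfh : sub_mp f h.
    move=> x; apply/subsetP => y yf.
    by have := Hh (enum_rank (x, y)); rewrite /u /t0 !tnth_mktuple enum_rankK /= yf.
  exact: (M4 f h Mh mf sfh).
Qed.
End Part2.

Theorem theorem2p5 (T : finType) :
  (forall (F : {set {perm T}}) (g : {perm T}),
      g \in <<F>>%g <-> AutS (InvP F) g) /\
  (forall F : mmap T -> Prop, (forall f, F f -> is_multiperm f) ->
      forall f : mmap T, gen_DSM F f <-> shE (Inv F) f).
Proof. split; [exact: part1 | exact: part2]. Qed.
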